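(* Let $e\ge 4$. The number of sparse colourings of the triangle $\triangle_{2,e-1}$ (a triangle of height $e-4$) equals the Catalan number $C_{e-3}=\frac{1}{e-2}\binom{2(e-3)}{e-3}$.
   Context: Dots are pairs of integers $(\alpha,\beta)$. For integers $\delta<\varepsilon$, the triangle $\triangle_{\delta,\varepsilon}$ is the set of dots $(\alpha,\beta)$ with $\delta\le\alpha$, $\beta\le\varepsilon$ and $\beta-\alpha\ge 2$; its height is $\varepsilon-\delta-1$. For a dot $(\alpha,\beta)\in\triangle_{\delta,\varepsilon}$, the sub-triangle $\triangle_{\alpha,\beta}$ is defined by the same rule. A colouring assigns to each dot the colour black or white. A coloured triangle $\triangle_{\delta,\varepsilon}$ is sparse if for every dot $(\alpha,\beta)\in\triangle_{\delta,\varepsilon}$ (including the vertex $(\delta,\varepsilon)$) the number of black dots in $\triangle_{\alpha,\beta}$ is at most $\beta-\alpha-1$, with equality if and only if $(\alpha,\beta)$ is black. (For $e=4$ the triangle is empty and has exactly one colouring.) *)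

(* Defs.v *)
From mathcomp Require Import all_boot.
Set Implicit Arguments. Unset Strict Implicit. Unset Printing Implicit Defensive.

(* Dots are pairs of naturals (a, b) (all indices here are >= 2, so nat suffices).
   Dot (a,b) lies in triangle △_{d,f} iff d <= a, b <= f, b - a >= 2. *)
Definition in_tri (d f a b : nat) : bool := (d <= a) && (b <= f) && (a + 2 <= b).

(* A colouring of △_{2,e-1} is represented by c : {ffun 'I_e * 'I_e -> bool}
   (true = black) which is false at every pair outside the triangle; all dots
   of △_{2,e-1} have coordinates < e. *)
Definition colouring (e : nat) := {ffun 'I_e * 'I_e -> bool}.

Definition supported (e : nat) (c : colouring e) : bool :=
  [forall x : 'I_e * 'I_e, ~~ in_tri 2 e.-1 x.1 x.2 ==> ~~ c x].

Definition nblack (e : nat) (c : colouring e) (a b : nat) : nat :=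
  #|[set x : 'I_e * 'I_e | in_tri a b x.1 x.2 && c x]|.

Definition sparse (e : nat) (c : colouring e) : bool :=
  [forall x : 'I_e * 'I_e, in_tri 2 e.-1 x.1 x.2 ==>
     (nblack c x.1 x.2 <= x.2 - x.1 - 1) &&
     ((nblack c x.1 x.2 == x.2 - x.1 - 1) == c x)].

(* Main.v *)
Require Import Defs.
From mathcomp Require Import all_boot.
From Stdlib Require Import Lia.
Set Implicit Arguments. Unset Strict Implicit. Unset Printing Implicit Defensive.

Ltac tonat := repeat match goal with
  | H : is_true (_ <= _) |- _ => move/leP: H => H
  | H : is_true (_ < _) |- _ => move/ltP: H => H
  | H : is_true (_ == _) |- _ => move/eqP: H => H
  | H : is_true (~~ (_ <= _)) |- _ => rewrite -ltnNge in H
  | H : is_true (~~ (_ == _)) |- _ => move/eqP: H => H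
  | H : is_true (_ && _) |- _ => move/andP: H => [? ?]
  | |- is_true _ -> _ => move=> ?
  | |- is_true (_ <= _) => apply/leP
  | |- is_true (_ < _) => apply/ltP
  | |- is_true (_ == _) => apply/eqP
  | |- is_true (_ && _) => apply/andP; split
  end; unfold addn, subn, muln in *; cbn [nat_of_bool] in *.
Ltac nlia := tonat; lia.

Definition Col (g : nat -> nat -> bool) a j := \sum_(a <= i < j.-1) (g i j : nat).
Definition Nb g a b := \sum_(0 <= j < b.+1) Col g a j.

Lemma NbS g a b : Nb g a b.+1 = Nb g a b + Col g a b.+1.
Proof. by rewrite /Nb big_nat_recr. Qed.

Lemma ColS g a j : a.+2 <= j -> Col g a j = g a j + Col g a.+1 j.
Proof. move=> h; rewrite /Col big_ltn //; nlia. Qed.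

Lemma Col0 g a j : j <= a.+1 -> Col g a j = 0.
Proof. move=> h; rewrite /Col big_geq //; nlia. Qed.

Lemma Col_mono g a j : Col g a.+1 j <= Col g a j.
Proof.
case: (ltnP a.+1 j) => h; first by rewrite (ColS g h) leq_addl.
by rewrite (Col0 g h) (@Col0 g a.+1 j (leqW h)).
Qed.

Lemma Nb_mono g a b : Nb g a.+1 b <= Nb g a b.
Proof. by apply: leq_sum => j _; apply: Col_mono. Qed.

Lemma eq_Nb g1 g2 a b : (forall i j, j <= b -> g1 i j = g2 i j) ->
  Nb g1 a b = Nb g2 a b.
Proof.
move=> h; apply: eq_big_nat => j /andP [_ hj]; apply: eq_big_nat => i _.
by rewrite h.
Qed.

Lemma Nb_short g a b : b <= a.+1 -> Nb g a b = 0.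
Proof.
move=> h; rewrite /Nb big_nat_cond big1 // => j /andP [/andP [_ hj] _].
apply: Col0; nlia.
Qed.

Lemma sum_range (m n K : nat) (G : nat -> nat) : n <= K ->
  \sum_(m <= i < n) G i = \sum_(0 <= i < K) (((m <= i) && (i < n)) * G i).
Proof.
elim: K n => [|K IH] n hn.
  by rewrite big_geq ?big_geq //; nlia.
rewrite big_nat_recr //=.
case: (ltnP K n) => hKn.
  have -> : n = K.+1 by nlia.
  have -> : \sum_(0 <= i < K) (((m <= i) && (i < K.+1)) * G i) =
            \sum_(0 <= i < K) (((m <= i) && (i < K)) * G i).
    by apply: eq_big_nat => i /andP [_ hi]; rewrite hi ltnS (ltnW hi).
  rewrite -(IH K) // andbT.
  case: (leqP m K) => hm; first by rewrite big_nat_recr //= mul1n.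
  by rewrite !big_geq //= ltnW.
by rewrite IH // andbF mul0n addn0.
Qed.

Definition cn e (c : colouring e) (i j : nat) : bool :=
  match (insub i : option 'I_e), (insub j : option 'I_e) with
  | Some i', Some j' => c (i', j') | _, _ => false end.

Lemma cn_ord e (c : colouring e) (x y : 'I_e) : cn c x y = c (x, y).
Proof. by rewrite /cn !valK. Qed.

Lemma cn_out e (c : colouring e) i j : ~~ ((i < e) && (j < e)) -> cn c i j = false.
Proof.
move=> H; rewrite /cn; case: insubP => [x hx _|//]; case: insubP => [y hy _|//].
by rewrite hx hy in H.
Qed.

Lemma cn_ex e (c : colouring e) i j : cn c i j -> (i < e) && (j < e).
Proof. by apply: contraLR => /cn_out ->. Qed.

Lemma nblackE e (c : colouring e) a b : nblack c a b = Nb (cn c) a b.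
Proof.
rewrite /nblack -sum1_card big_mkcond /=.
rewrite (eq_bigr (fun x : 'I_e * 'I_e => (in_tri a b x.1 x.2 && cn c x.1 x.2 : nat))); last first.
  by move=> [x y] _; rewrite in_set /= cn_ord; case: (_ && _).
rewrite -(pair_big xpredT xpredT (fun x y : 'I_e => (in_tri a b x y && cn c x y : nat))) /=.
set F := fun x y => (in_tri a b x y && cn c x y : nat).
have -> : \sum_(i < e) \sum_(j < e) F i j = \sum_(0 <= i < e) \sum_(0 <= j < e) F i j.
  rewrite big_mkord; apply: eq_bigr => i _; by rewrite big_mkord.
set K := e + b.+2.
rewrite (sum_range 0 (n:=e) (K:=K)); last by nlia.
have E1 : forall i, \sum_(0 <= j < e) F i j = \sum_(0 <= j < K) (((0 <= j) && (j < e)) * F i j).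
  by move=> i; rewrite (sum_range 0 (n:=e) (K:=K)) //; nlia.
under eq_bigr do rewrite E1.
rewrite /Nb (sum_range 0 (n:=b.+1) (K:=K)); last by nlia.
rewrite [in RHS](eq_big_nat _ _ (F2 := fun j => \sum_(0 <= i < K) ((0 <= j) && (j < b.+1)) * (((a <= i) && (i < j.-1)) * cn c i j))); last first.
  move=> j /andP [_ hj]; rewrite /Col (sum_range a (n:=j.-1) (K:=K)); last by nlia.
  by rewrite big_distrr.
rewrite exchange_big_nat /=.
under eq_bigr do rewrite big_distrr.
apply: eq_big_nat => i _; apply: eq_big_nat => j _.
rewrite /F /in_tri.
rewrite /= !mulnb; congr (nat_of_bool _).
case: (boolP ((i < e) && (j < e))) => hij; last by rewrite cn_out // !andbF.
move/andP: hij => [hi hj]; rewrite hi hj /=.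
case: (cn c i j); rewrite ?andbT ?andbF //.
case: (leqP a i) => hai; rewrite /= ?andbF //.
apply/idP/idP => H; nlia.
Qed.

Definition spc g a b := (Nb g a b <= b - a - 1) && ((Nb g a b == b - a - 1) == g a b).
Definition goodP e (g : nat -> nat -> bool) :=
  (forall i j, g i j -> in_tri 2 e.-1 i j) /\ (forall a b, in_tri 2 e.-1 a b -> spc g a b).

Lemma goodE e (c : colouring e) : supported c && sparse c <-> goodP e (cn c).
Proof.
split.
- move/andP => [/forallP hs /forallP hp]; split.
  + move=> i j hc; have /andP [hi hj] := cn_ex hc.
    have := hs (Ordinal hi, Ordinal hj); rewrite /= -cn_ord /= hc.
    by case: in_tri.
  + move=> a b ht.
    have ha : a < e by move: ht; rewrite /in_tri => H; nlia.
    have hb : b < e by move: ht; rewrite /in_tri => H; nlia.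
    have := hp (Ordinal ha, Ordinal hb); rewrite /= ht /= nblackE -cn_ord /=.
    by [].
- move=> [hs hp]; apply/andP; split; apply/forallP => [[x y]] /=; apply/implyP.
  + move=> hn; apply/negP => hc; rewrite -cn_ord in hc.
    by move: (hs _ _ hc); rewrite (negbTE hn).
  + by move=> ht; rewrite nblackE -cn_ord; exact: hp.
Qed.

Lemma NbB f g a : goodP f.+1 g -> 2 <= a -> Nb g a f <= f - a - 1.
Proof.
move=> [_ hp] ha; case: (leqP (a.+2) f) => h.
  have : in_tri 2 f a f by rewrite /in_tri; nlia.
  by move/hp => /andP [].
by rewrite Nb_short //; nlia.
Qed.

Lemma bitE f g a : goodP f.+2 g -> 2 <= a -> a.+2 <= f.+1 ->
  g a f.+1 = (Nb g a f + Col g a f.+1 == f.+1 - a - 1).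
Proof.
move=> [_ hp] h1 h2.
have : in_tri 2 f.+1 a f.+1 by rewrite /in_tri; nlia.
by move/hp => /andP [_ /eqP <-]; rewrite NbS.
Qed.

Lemma col_unique f g1 g2 : 3 <= f -> goodP f.+2 g1 -> goodP f.+2 g2 ->
  (forall i j, j <= f -> g1 i j = g2 i j) -> Nb g1 2 f.+1 = Nb g2 2 f.+1 ->
  forall i j, g1 i j = g2 i j.
Proof.
move=> hf G1 G2 hlt htop.
have eqN : forall a, Nb g1 a f = Nb g2 a f by move=> a; apply: eq_Nb.
have key : forall s, 2 + s <= f -> Col g1 (2 + s) f.+1 = Col g2 (2 + s) f.+1.
  elim => [|s IH] hs.
    by move: htop; rewrite !NbS eqN addn0 => /addnI.
  have hs' : 2 + s <= f by nlia.
  have := IH hs'.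
  rewrite (ColS g1 (a := 2 + s)) ?(ColS g2 (a := 2 + s)); try nlia.
  rewrite (bitE G1) ?(bitE G2); try nlia.
  by rewrite IH // eqN addnS => /addnI.
move=> i j.
case: (leqP j f) => hj; first exact: hlt.
have hF : forall g, goodP f.+2 g -> ~~ ((j == f.+1) && (2 <= i) && (i.+2 <= f.+1)) -> g i j = false.
  move=> g [hs _] H; apply/negP => /hs; rewrite /in_tri => H'.
  move: H; rewrite !negb_and => /orP [/orP [H|H]|H]; nlia.
case: (boolP ((j == f.+1) && (2 <= i) && (i.+2 <= f.+1))) => H; last by rewrite !hF.
move: H => /andP [/andP [/eqP -> h1] h2].
have hi : i = 2 + (i - 2) by nlia.
rewrite (bitE G1) // (bitE G2) // eqN hi key; last by nlia.
by [].
Qed.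

Definition Dd g f a := (f - a - 1) - Nb g a f.
Fixpoint tt g f t0 s := match s with
  | 0 => t0
  | s'.+1 => tt g f t0 s' - (tt g f t0 s' == Dd g f (2 + s') + 1) end.

Lemma col_exists f g m : 3 <= f -> goodP f.+1 g -> Nb g 2 f <= m -> m <= f - 2 ->
  exists g', goodP f.+2 g' /\ (forall i j, j <= f -> g' i j = g i j) /\ Nb g' 2 f.+1 = m.
Proof.
move=> hf G hm1 hm2.
set t0 := m - Nb g 2 f.
set T := tt g f t0.
set cb := fun i => (2 <= i) && (i <= f - 1) && (T (i - 2) == Dd g f i + 1).
set g' := fun i j => if j == f.+1 then cb i else g i j.
have I1 : forall s, 2 + s <= f - 1 -> T s <= Dd g f (2 + s) + 1.
  elim => [|s IH] hs.
    rewrite /T /= /t0 /Dd addn0; have := NbB G (leqnn 2); nlia.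
  rewrite /T /= -/T.
  have hs' : 2 + s <= f - 1 by nlia.
  have h2 : 2 <= 2 + s.+1 by nlia.
  have := IH hs'.
  have := NbB G h2; have := @Nb_mono g (2 + s) f.
  rewrite /Dd addnS.
  case: eqP => h; nlia.
have I2 : T (f - 2) = 0.
  have -> : f - 2 = (f - 3).+1 by nlia.
  rewrite /T /= -/T.
  have h3 : 2 + (f - 3) <= f - 1 by nlia.
  have := I1 (f - 3) h3.
  have -> : 2 + (f - 3) = f - 1 by nlia.
  rewrite /Dd.
  case: eqP => h; nlia.
have I3 : forall k a, a + k = f -> 2 <= a -> Col g' a f.+1 = T (a - 2).
  elim => [|k IH] a hk ha.
    rewrite Col0; last by nlia.
    by rewrite -I2; congr T; nlia.
  rewrite ColS; last by nlia.
  have hk' : a.+1 + k = f by nlia.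
  have ha' : 2 <= a.+1 by nlia.
  rewrite (IH a.+1 hk' ha').
  rewrite /g' eqxx /cb.
  have -> : a.+1 - 2 = (a - 2).+1 by nlia.
  rewrite /T /= -/T.
  have -> : 2 + (a - 2) = a by nlia.
  rewrite ha /=.
  have -> : a <= f - 1 by nlia.
  case: eqP => h /=; nlia.
have hg'f : forall i j, j <= f -> g' i j = g i j.
  move=> i j hj; rewrite /g'; case: eqP => //; nlia.
exists g'; split; last split => //.
- split.
  + move=> i j; rewrite /g'; case: eqP => [->|hj].
      rewrite /cb => /andP [/andP [h1 h2] _]; rewrite /in_tri; nlia.
    move/(proj1 G); rewrite /in_tri => H; nlia.
  + move=> a b; rewrite /in_tri => H.
    case: (leqP b f) => hb.
      rewrite /spc (eq_Nb (g2 := g)); last by move=> i j hj; apply: hg'f; nlia.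
      rewrite hg'f //; apply: (proj2 G); rewrite /in_tri; nlia.
    have hbf : b = f.+1 by nlia.
    subst b.
    have ha2 : 2 <= a by nlia.
    rewrite /spc NbS (eq_Nb (g2 := g)); last by move=> i j hj; apply: hg'f.
    rewrite (I3 (f - a) a) //; last by nlia.
    rewrite /g' eqxx /cb ha2 /=.
    have -> : a <= f - 1 by nlia.
    have h3 : 2 + (a - 2) <= f - 1 by nlia.
    have := I1 (a - 2) h3.
    have -> : 2 + (a - 2) = a by nlia.
    have := NbB G ha2.
    rewrite /Dd => h1 h2; rewrite andTb.
    apply/andP; split; first by nlia.
    by apply/eqP; apply/idP/idP => /eqP h; apply/eqP; nlia.
- rewrite NbS (eq_Nb (g2 := g)); last by move=> i j hj; apply: hg'f.
  rewrite (I3 (f - 2) 2) //; last by nlia.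
  rewrite /T /= /t0; nlia.
Qed.

Definition restr e (c : colouring e.+1) : colouring e :=
  [ffun x : 'I_e * 'I_e => c (widen_ord (leqnSn e) x.1, widen_ord (leqnSn e) x.2)].

Lemma cn_restr e (c : colouring e.+1) i j :
  cn (restr c) i j = (i < e) && (j < e) && cn c i j.
Proof.
case: (boolP ((i < e) && (j < e))) => h; last by rewrite cn_out.
move/andP: h => [hi hj] /=.
have E1 : cn (restr c) i j = cn (restr c) (Ordinal hi) (Ordinal hj) by [].
have E2 : cn c i j = cn c (widen_ord (leqnSn e) (Ordinal hi)) (widen_ord (leqnSn e) (Ordinal hj)) by [].
by rewrite E1 E2 !cn_ord ffunE.
Qed.

Lemma cn_mk e (g : nat -> nat -> bool) :
  (forall i j, g i j -> (i < e) && (j < e)) ->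
  forall i j, cn [ffun x : 'I_e * 'I_e => g x.1 x.2] i j = g i j.
Proof.
move=> hg i j.
case: (boolP ((i < e) && (j < e))) => h; last first.
  rewrite cn_out //; apply/esym/negbTE; apply: contra h; exact: hg.
move/andP: h => [hi hj].
have E1 : cn [ffun x : 'I_e * 'I_e => g x.1 x.2] i j =
          cn [ffun x : 'I_e * 'I_e => g x.1 x.2] (Ordinal hi) (Ordinal hj) by [].
by rewrite E1 cn_ord ffunE.
Qed.

Lemma goodP_ext e g1 g2 : (forall i j, g1 i j = g2 i j) -> goodP e g1 -> goodP e g2.
Proof.
move=> h [hs hp]; split.
  by move=> i j; rewrite -h; apply: hs.
move=> a b ht; rewrite /spc -(eq_Nb (g1 := g1)); last by move=> i j _; apply: h.
by rewrite -h; apply: hp.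
Qed.

Lemma restr_eq f (c : colouring f.+2) i j : goodP f.+2 (cn c) -> j <= f ->
  cn (restr c) i j = cn c i j.
Proof.
move=> [hs _] hj; rewrite cn_restr.
case: (boolP (cn c i j)) => h; last by rewrite andbF.
have := hs _ _ h; rewrite /in_tri => H.
rewrite andbT; apply/andP; split; nlia.
Qed.

Lemma restr_good f (c : colouring f.+2) : goodP f.+2 (cn c) -> goodP f.+1 (cn (restr c)).
Proof.
move=> G; split.
  move=> i j; rewrite cn_restr => /andP [/andP [hi hj] h].
  have := proj1 G _ _ h; rewrite /in_tri => H; nlia.
move=> a b ht.
have hb : b <= f by move: ht; rewrite /in_tri => H; nlia.
rewrite /spc (eq_Nb (g2 := cn c)); last by move=> i j hj; apply: restr_eq => //; nlia.
rewrite restr_eq //; apply: (proj2 G); move: ht; rewrite /in_tri => H; nlia.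
Qed.

Definition Ntop e (c : colouring e) := Nb (cn c) 2 e.-1.

Lemma bij f m : 3 <= f -> m <= f - 2 ->
  #|[set c : colouring f.+2 | supported c && sparse c && (Ntop c == m)]| =
  #|[set c : colouring f.+1 | supported c && sparse c && (Ntop c <= m)]|.
Proof.
move=> hf hm2.
set A := [set c : colouring f.+2 | _].
have inj : {in A &, injective (@restr f.+1)}.
  move=> c1 c2; rewrite !inE => /andP [/goodE G1 /eqP t1] /andP [/goodE G2 /eqP t2] hr.
  apply/ffunP => -[x y]; rewrite -!cn_ord; apply: (col_unique (f := f)) => //.
    move=> i j hj; by rewrite -(restr_eq i G1 hj) -(restr_eq i G2 hj) hr.
  by move: t1 t2; rewrite /Ntop /= => -> ->.
rewrite -(card_in_imset inj); apply: eq_card => c; rewrite [in RHS]inE; apply/imsetP/idP.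
  move=> [c' hc' ->].
  move: hc'; rewrite inE => /andP [/goodE G /eqP t].
  apply/andP; split; first by apply/goodE; apply: restr_good.
  rewrite /Ntop /= (eq_Nb (g2 := cn c')); last by move=> i j hj; apply: restr_eq.
  by rewrite -t /Ntop /= NbS leq_addr.
move=> /andP [/goodE G hm].
move: hm; rewrite /Ntop /= => hm.
have [g' [G' [hg hN]]] := col_exists hf G hm hm2.
set c' := [ffun x : 'I_f.+2 * 'I_f.+2 => g' x.1 x.2].
have hc' : forall i j, cn c' i j = g' i j.
  apply: cn_mk => i j /(proj1 G'); rewrite /in_tri => H; nlia.
exists c'.
  rewrite inE; apply/andP; split.
    by apply/goodE; apply: (goodP_ext (g1 := g')) => // i j; rewrite hc'.
  by rewrite /Ntop /= (eq_Nb (g2 := g')) ?hN // => i j _; rewrite hc'.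
apply/ffunP => -[x y]; rewrite ffunE /= -!cn_ord /= hc' hg //.
by rewrite -ltnS.
Qed.

Lemma partition_card (T : finType) (P : pred T) (F : T -> nat) m :
  #|[set x | P x && (F x <= m)]| = \sum_(j < m.+1) #|[set x | P x && (F x == j)]|.
Proof.
elim: m => [|m IH].
  rewrite big_ord1; apply: eq_card => x.
  by rewrite !inE leqn0.
rewrite big_ord_recr /= -IH.
have -> : [set x | P x && (F x <= m.+1)] =
    [set x | P x && (F x <= m)] :|: [set x | P x && (F x == m.+1)].
  apply/setP => x; rewrite !inE leq_eqVlt ltnS; case: (P x) => //=; by rewrite orbC.
rewrite cardsU.
have -> : [set x | P x && (F x <= m)] :&: [set x | P x && (F x == m.+1)] = set0.
  apply/setP => x; rewrite !inE; case: (P x) => //=.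
  by case: eqP => [->|]; rewrite ?ltnn ?andbF.
by rewrite cards0 subn0.
Qed.

Fixpoint cat n k : nat := match n with
  | 0 => (k == 0 : nat)
  | n'.+1 => if k <= n then \sum_(j < k.+1) cat n' j else 0 end.

Lemma cat_zero n k : n < k -> cat n k = 0.
Proof.
case: n => [|n] h /=; first by case: k h.
by rewrite leqNgt h.
Qed.

Lemma cat_closed n k : k <= n.+1 ->
  cat n k + (if k is k'.+1 then 'C(n + k, k') else 0) = 'C(n + k, k).
Proof.
elim: n k => [|n IHn] k hk.
  by case: k hk => [|[|k]].
elim: k hk => [|k IHk] hk.
  have := IHn 0 isT; rewrite /= big_ord1 !addn0 !bin0 => ->; by [].
case: (eqVneq k.+1 n.+2) => hkn.
  move: hkn => [->]; rewrite cat_zero // add0n.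
  rewrite -(bin_sub (n := n.+1 + n.+2) (m := n.+2)); last by rewrite leq_addl.
  congr 'C(_, _); nlia.
have hk1 : k.+1 <= n.+1 by nlia.
have hk2 : k <= n.+1 by nlia.
have Hsplit : cat n.+1 k.+1 = cat n.+1 k + cat n k.+1.
  by rewrite /= hk1 hk2 big_ord_recr.
have := IHk (ltnW hk); have := IHn k.+1 hk1.
rewrite Hsplit addSnnS -/(addn n k.+1) => H1 H2.
have B1 : 'C((n + k.+1).+1, k.+1) = 'C(n + k.+1, k.+1) + 'C(n + k.+1, k) by rewrite binS.
have B2 : 'C((n + k.+1).+1, k) = 'C(n + k.+1, k) + (if k is k'.+1 then 'C(n + k.+1, k') else 0).
  by case: k {IHk hk hkn hk1 hk2 Hsplit H1 H2 B1} => [|k]; rewrite ?bin0 ?addn0 // binS.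
rewrite addSn B1 B2.
case: k {IHk hk hkn hk1 hk2 Hsplit B1 B2} H1 H2 => [|k] H1 H2; nlia.
Qed.

Lemma Bcount n m :
  #|[set c : colouring n.+4 | supported c && sparse c && (Ntop c == m)]| = cat n m.
Proof.
elim: n m => [|n IH] m.
  have good0 : forall c : colouring 4, supported c -> c = [ffun => false].
    move=> c /forallP hs; apply/ffunP => x; rewrite ffunE; apply/negbTE.
    have := hs x; move/implyP; apply; apply/negP; rewrite /in_tri => H; nlia.
  have Nt0 : forall c : colouring 4, Ntop c = 0 by move=> c; rewrite /Ntop Nb_short.
  have G0 : supported ([ffun => false] : colouring 4) && sparse ([ffun => false] : colouring 4).
    apply/andP; split; apply/forallP => x; rewrite ?ffunE ?implybT //.
    apply/implyP; rewrite /in_tri => H; nlia.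
  case: m => [|m].
    transitivity #|[set ([ffun => false] : colouring 4)]|; last by rewrite cards1.
    apply: eq_card => c.
    rewrite !inE Nt0 eqxx andbT; apply/idP/eqP.
      by move/andP => [hs _]; exact: good0.
    by move=> ->.
  by apply: eq_card0 => c; rewrite inE Nt0 andbF.
case: (leqP m n.+1) => hm.
  rewrite (bij (f := n.+3)) //.
  have := partition_card (fun c : colouring n.+4 => supported c && sparse c) (@Ntop n.+4) m.
  rewrite /= => ->; rewrite hm; apply: eq_bigr => j _; exact: IH.
rewrite /= leqNgt hm /=.
apply: eq_card0 => c; rewrite inE; apply/negP => /andP [/goodE G /eqP t].
have := NbB G (leqnn 2); move: t; rewrite /Ntop /= => t; nlia.
Qed.

Theorem mainTheorem2 (e : nat) (he : 4 <= e) :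
  #|[set c : colouring e | supported c && sparse c]| =
  'C((e - 3).*2, e - 3) %/ (e - 2).
Proof.
have [n en] : exists n, e = n.+4 by exists (e - 4); nlia.
subst e.
have E : #|[set c : colouring n.+4 | supported c && sparse c]| =
         #|[set c : colouring n.+4 | supported c && sparse c && (Ntop c <= n)]|.
  apply: eq_card => c; rewrite !inE.
  case: (boolP (supported c && sparse c)) => //= /goodE G.
  have := NbB G (leqnn 2); rewrite /Ntop /= => h.
  have h' : Nb (cn c) 2 n.+3 <= n by nlia.
  by rewrite h'.
rewrite E.
have := partition_card (fun c : colouring n.+4 => supported c && sparse c) (@Ntop n.+4) n.
rewrite /= => ->.
under eq_bigr => j _ do rewrite Bcount.
have S : \sum_(j < n.+1) cat n j = cat n.+1 n.+1.
  by rewrite [in RHS]/= leqnn [in RHS]big_ord_recr /= (@cat_zero n n.+1) // addn0.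
rewrite S.
have -> : n.+4 - 3 = n.+1 by nlia.
have -> : n.+4 - 2 = n.+2 by nlia.
have C := @cat_closed n.+1 n.+1 (leqnSn _).
have M := mul_bin_left (n.+1 + n.+1) n.
rewrite -addnn.
move: C M.
set X := 'C(n.+1 + n.+1, n.+1); set Y := 'C(n.+1 + n.+1, n); set Z := cat n.+1 n.+1.
have -> : n.+1 + n.+1 - n = n.+2 by nlia.
move=> C M.
have HX : X = n.+2 * Z.
  have : n.+2 * (Z + Y) = n.+2 * X by rewrite C.
  rewrite mulnDr -M (mulSn n.+1 X) => H.
  apply/eqP; rewrite -(eqn_add2r (n.+1 * X)); apply/eqP; rewrite H; by [].
by rewrite HX mulKn.
Qed.
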